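(* Consider the DI-VKECM scheme described below and the following modified cloning attack on it: (a) a uniformly random message $M\in\{0,1\}^\lambda$ is encrypted with $\mathsf{Enc}$, except that the receiver is never given the classical register $C$; (b) an arbitrary channel distributes the receiver's state between Bob and Charlie; (c) $\mathsf{KeyRel}(K_{\mathrm{priv}})$ is run independently for Bob and for Charlie, where for Bob the string $\widetilde X$ produced is called $Y$ and the string $\widetilde A$ produced is called $\widetilde A^{\mathrm B}$, and for Charlie these are called $Z$ and $\widetilde A^{\mathrm C}$; Bob receives only $Y$ (not $R\oplus\widetilde A^{\mathrm B}$ nor $\mathtt{syn}(\widetilde A^{\mathrm B})$) and Charlie receives only $Z$; (d) Bob outputs a guess $G^{\mathrm B}$ of $\widetilde A^{\mathrm B}$ and Charlie a guess $G^{\mathrm C}$ of $\widetilde A^{\mathrm C}$. Let $\mathcal{T}=\{i\in[l]: Y_i=Z_i=X_i+2\}$ (the instances where neither received $\perp$), and for a string $W$ let $W_{\mathcal T}$ be its restriction to $\mathcal T$. If there is no leakage between the client's and receiver's devices during $\mathsf{Enc}$ and none between Bob's and Charlie's devices after they receive their keys, then \[\Pr\left[F=\text{accept}\wedge\widetilde A^{\mathrm B}_{\mathcal T}=G^{\mathrm B}_{\mathcal T}\wedge\widetilde A^{\mathrm C}_{\mathcal T}=G^{\mathrm C}_{\mathcal T}\right]\le 2^{-\kappa\delta_{\gamma,\alpha}^3\alpha^4 l}.\]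
   Context: $\omega^*(\mathrm{CHSH})=\frac12(1+\frac1{\sqrt2})$. $\mathrm{CLONE}_{\gamma,\alpha}$: Alice and Barlie share an entangled state; round 1: Alice gets uniform $x\in\{0,1\}$, Barlie independently gets $u\in\{0,1,\mathrm{keep}\}$ w.p. $\gamma/2,\gamma/2,1-\gamma$, they output bits $a,s$; Barlie distributes his registers to non-communicating Bob and Charlie; round 2: Bob gets $y$, Charlie gets $z$, each independently $\perp$ w.p. $\alpha$ and $x$ otherwise; they output bits $b,c$; win iff ($u\ne\mathrm{keep}$ and $a\oplus s=xu$) or ($u=\mathrm{keep}$ and ($y=\perp$ or $z=\perp$ or $b=c=a$)). $\delta_{\gamma,\alpha}>0$ satisfies $\omega^*(\mathrm{CLONE}_{\gamma,\alpha})\le(1-\gamma)+\gamma\omega^*(\mathrm{CHSH})-\delta_{\gamma,\alpha}$, and $\kappa>0$ is an absolute constant such that the quantum probability of winning at least $((1-\gamma)+\gamma\omega^*(\mathrm{CHSH})-\delta_{\gamma,\alpha}/2)l$ of $l$ parallel copies of $\mathrm{CLONE}_{\gamma,\alpha}$ is at most $2^{-\kappa\delta_{\gamma,\alpha}^3\alpha^4l}$. Devices are untrusted: client and receiver devices share an arbitrary quantum state on a bipartite space, each measuring its own factor; client's device takes inputs in $\{0,1\}^l$, receiver's in $\{0,1,2,3,\perp\}^l$; both output strings in $\{0,1\}^l$. Scheme (parameters $\gamma,\alpha\in(0,1)$, syndrome function $\mathtt{syn}$). $\mathsf{Enc}(1^\lambda,m)$: $l=\lambda$; client samples uniform $X\in\{0,1\}^l$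 and independent $U_i\in\{\mathrm{keep},0,1\}$ w.p. $1-\gamma,\gamma/2,\gamma/2$; inputs $X$ into its device, gets $A$; sends $U$ to the receiver, who returns a string $S$ (honestly: device output on input $U$ with keep read as $\perp$); client sets $F=\text{accept}$ iff $|\{i:U_i\ne\mathrm{keep},A_i\oplus S_i\ne X_iU_i\}|\le(\gamma(1-\omega^*(\mathrm{CHSH}))+\delta_{\gamma,\alpha}/2)l$; if accept, samples uniform $R\in\{0,1\}^\lambda$ and sends $C=m\oplus R$, else sends a uniform independent $C$. Private key $(X,U,A,R)$. $\mathsf{KeyRel}(X,U,A,R)$: sample $\widetilde X_i=\perp$ w.p. $\alpha$ independently, else $\widetilde X_i=X_i+2$; set $\widetilde A_i=0$ if $U_i\ne\mathrm{keep}$ or $\widetilde X_i=\perp$, else $\widetilde A_i=A_i$; output $(R\oplus\widetilde A,\mathtt{syn}(\widetilde A),\widetilde X)$. *)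

(* Defs.v *)
From HB Require Import structures.
From mathcomp Require Import all_boot all_order all_algebra.
From mathcomp Require Import complex mxtens.
From mathcomp Require Import reals exp.

Set Implicit Arguments.
Unset Strict Implicit.
Unset Printing Implicit Defensive.

Import Order.TTheory GRing.Theory Num.Theory.
Local Open Scope ring_scope.

Section QM.
Variable R : realType.
Local Notation C := R[i].

Definition adjmx m n (A : 'M[C]_(m, n)) : 'M[C]_(n, m) := (map_mx conjc A)^T.

Definition psd n (A : 'M[C]_n) : Prop :=
  adjmx A = A /\ forall v : 'cV[C]_n, 0 <= (adjmx v *m A *m v) 0 0.

Definition density n (rho : 'M[C]_n) : Prop := psd rho /\ \tr rho = 1.

Definition povm (O : finType) n (M : O -> 'M[C]_n) : Prop :=
  (forall o, psd (M o)) /\ \sum_(o : O) M o = 1%:M.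
End QM.

(** Bit strings of length l, and the alphabet {0,1,keep} with None = keep. *)
Notation bits l := {ffun 'I_l -> bool}.
Notation ustr l := {ffun 'I_l -> option bool}.

(** A general quantum strategy for the two-round, three-party setting
    (Alice/client device; Barlie/receiver who, on input u, outputs s and
    distributes his registers to Bob and Charlie via an arbitrary quantum
    instrument, given by Kraus operators; then Bob and Charlie measure
    separately).  Tensor-product structure = no leakage. *)
Record strategy (R : realType) (l : nat) (I : finType) := Strategy {
  dA : nat; dB : nat; dBo : nat; dCh : nat; nK : nat;
  st_rho : 'M[R[i]]_(dA * dB);
  st_A : bits l -> bits l -> 'M[R[i]]_dA;          (* input x, outcome a *)
  st_K : ustr l -> bits l -> 'I_nK -> 'M[R[i]]_(dBo * dCh, dB);
                                                    (* input u, outcome s *)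
  st_Bob : {ffun 'I_l -> I} -> bits l -> 'M[R[i]]_dBo;
  st_Charlie : {ffun 'I_l -> I} -> bits l -> 'M[R[i]]_dCh
}.
Arguments dA {R l I} s.
Arguments dB {R l I} s.
Arguments dBo {R l I} s.
Arguments dCh {R l I} s.
Arguments nK {R l I} s.
Arguments st_rho {R l I} s.
Arguments st_A {R l I} s _ _.
Arguments st_K {R l I} s _ _ _.
Arguments st_Bob {R l I} s _ _.
Arguments st_Charlie {R l I} s _ _.

Section Strat.
Variables (R : realType) (l : nat) (I : finType) (S : strategy R l I).
Local Open Scope ring_scope.

Definition valid_strategy : Prop :=
  [/\ density (st_rho S),
      (forall x, povm (st_A S x)),
      (forall u, \sum_(s : bits l) \sum_(k < nK S)
                   adjmx (st_K S u s k) *m st_K S u s k = 1%:M),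
      (forall y, povm (st_Bob S y)) &
      (forall z, povm (st_Charlie S z))].

Definition post_state (u : ustr l) (s : bits l) :
  'M[R[i]]_(dA S * (dBo S * dCh S)) :=
  \sum_(k < nK S)
     (1%:M *t st_K S u s k) *m st_rho S *m adjmx (1%:M *t st_K S u s k).

Definition jointp (x : bits l) (u : ustr l) (y z : {ffun 'I_l -> I})
    (a s b c : bits l) : R :=
  @complex.Re R (\tr ((st_A S x a *t (st_Bob S y b *t st_Charlie S z c)) *m post_state u s)).
End Strat.

Section Games.
Variable R : realType.
Local Open Scope ring_scope.

Definition omega_CHSH : R := (1 + (Num.sqrt (2 : R))^-1) / 2.

Definition pX (l : nat) (x : bits l) : R := (2 ^+ l)^-1.

Definition pU (gamma : R) (l : nat) (u : ustr l) : R :=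
  \prod_(i < l) (if u i is Some _ then gamma / 2 else 1 - gamma).

Definition xu l (x : bits l) (u : ustr l) (i : 'I_l) : bool :=
  if u i is Some b then x i && b else false.

(** Bob/Charlie input: None = perp, Some x_i otherwise *)
Definition pClone (alpha : R) l (x : bits l) (y : {ffun 'I_l -> option bool}) : R :=
  \prod_(i < l) (if y i is Some b then (if b == x i then 1 - alpha else 0)
                 else alpha).

Definition clone_win_i l (x : bits l) (u : ustr l)
  (y z : {ffun 'I_l -> option bool}) (a s b c : bits l) (i : 'I_l) : bool :=
  if u i is Some _ then (a i (+) s i) == xu x u i
  else [|| y i == None, z i == None | (b i == a i) && (c i == a i)].

Definition clone_expect l (gamma alpha : R)
  (S : strategy R l (option bool))
  (f : bits l -> ustr l -> {ffun 'I_l -> option bool} ->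
       {ffun 'I_l -> option bool} -> bits l -> bits l -> bits l -> bits l -> bool) : R :=
  \sum_(x : bits l) \sum_(u : ustr l)
  \sum_(y : {ffun 'I_l -> option bool}) \sum_(z : {ffun 'I_l -> option bool})
  \sum_(a : bits l) \sum_(s : bits l) \sum_(b : bits l) \sum_(c : bits l)
    pX x * pU gamma u * pClone alpha x y * pClone alpha x z
    * jointp S x u y z a s b c * (f x u y z a s b c)%:R.

Definition clone_win_prob (gamma alpha : R) (S : strategy R 1 (option bool)) : R :=
  clone_expect gamma alpha S
    (fun x u y z a s b c => clone_win_i x u y z a s b c ord0).

Definition clone_par_prob l (gamma alpha t : R) (S : strategy R l (option bool)) : R :=
  clone_expect gamma alpha S
    (fun x u y z a s b c =>
       t * l%:R <= #|[set i | clone_win_i x u y z a s b c i]|%:R).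

(** receiver alphabet {0,1,2,3,perp}: None = perp, Some k = k *)
Definition plus2 (b : bool) : 'I_4 := inord (b + 2).

(** KeyRel's Xtilde: perp w.p. alpha, else X_i + 2, independently *)
Definition pKey (alpha : R) l (x : bits l) (y : {ffun 'I_l -> option 'I_4}) : R :=
  \prod_(i < l) (if y i is Some k then (if k == plus2 (x i) then 1 - alpha else 0)
                 else alpha).

Definition Atilde l (u : ustr l) (y : {ffun 'I_l -> option 'I_4}) (a : bits l) : bits l :=
  [ffun i => if (u i != None) || (y i == None) then false else a i].

Definition accept l (gamma delta : R) (x : bits l) (u : ustr l) (a s : bits l) : bool :=
  #|[set i | (u i != None) && ((a i (+) s i) != xu x u i)]|%:R
    <= (gamma * (1 - omega_CHSH) + delta / 2) * l%:R.

Definition Tset l (x : bits l) (y z : {ffun 'I_l -> option 'I_4}) : {set 'I_l} :=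
  [set i | (y i == Some (plus2 (x i))) && (z i == Some (plus2 (x i)))].

Definition eq_on l (T : {set 'I_l}) (w w' : bits l) : bool :=
  [forall i in T, w i == w' i].

(** Pr[F = accept /\ AtildeB_T = GB_T /\ AtildeC_T = GC_T] in the attack:
    x = X, u = U, y = Y, z = Z, a = A, s = S, gb = G^B, gc = G^C. *)
Definition attack_prob l (gamma alpha delta : R)
  (S : strategy R l (option 'I_4)) : R :=
  \sum_(x : bits l) \sum_(u : ustr l)
  \sum_(y : {ffun 'I_l -> option 'I_4}) \sum_(z : {ffun 'I_l -> option 'I_4})
  \sum_(a : bits l) \sum_(s : bits l) \sum_(gb : bits l) \sum_(gc : bits l)
    pX x * pU gamma u * pKey alpha x y * pKey alpha x z
    * jointp S x u y z a s gb gc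
    * [&& accept gamma delta x u a s,
          eq_on (Tset x y z) (Atilde u y a) gb
        & eq_on (Tset x y z) (Atilde u z a) gc]%:R.
End Games.
Arguments omega_CHSH {R}.

(* Main.v *)
Require Import Defs.
From HB Require Import structures.
From mathcomp Require Import all_boot all_order all_algebra.
From mathcomp Require Import complex mxtens spectral.
From mathcomp Require Import reals exp.
From mathcomp Require Import ring.
Import Order.TTheory GRing.Theory Num.Theory.
Local Open Scope ring_scope.
Set Implicit Arguments.
Section Pos.
Variable R : realType.
Local Notation C := R[i].

Lemma adjmxE m n (A : 'M[C]_(m, n)) : adjmx A = map_mx Num.conj A^T.
Proof. by rewrite /adjmx map_trmx. Qed.

Lemma adjmx_mul m n p (A : 'M[C]_(m, n)) (B : 'M[C]_(n, p)) :
  adjmx (A *m B) = adjmx B *m adjmx A.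
Proof. by rewrite /adjmx map_mxM trmx_mul. Qed.

Lemma adjmxK m n (A : 'M[C]_(m, n)) : adjmx (adjmx A) = A.
Proof. by apply/matrixP=> i j; rewrite !mxE conjcK. Qed.

Lemma adjmx_tens m n p q (A : 'M[C]_(m, n)) (B : 'M[C]_(p, q)) :
  adjmx (A *t B) = adjmx A *t adjmx B.
Proof. by apply/matrixP=> i j; rewrite !mxE /= rmorphM. Qed.

Lemma tr_gram_ge0 m n (M : 'M[C]_(m, n)) : 0 <= \tr (adjmx M *m M).
Proof.
rewrite /mxtrace; apply: sumr_ge0 => i _; rewrite !mxE.
apply: sumr_ge0 => k _; rewrite !mxE mulrC.
exact: (mul_conjC_ge0 (M k i)).
Qed.

Lemma adjmx_diag n (e : 'rV[C]_n) : adjmx (diag_mx e) = diag_mx (map_mx Num.conj e).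
Proof.
apply/matrixP=> i k; rewrite !mxE rmorphMn /= eq_sym.
by case: (i =P k) => [->|] //.
Qed.

Lemma gram_psd n (A : 'M[C]_n) : psd A -> exists B : 'M[C]_n, A = adjmx B *m B.
Proof.
move=> [hA hpos].
have hAt : map_mx Num.conj A^T = A by rewrite -adjmxE.
have nA : A \is normalmx by apply/normalmxP; rewrite hAt.
have := orthomx_spectralP nA.
set P := spectralmx A; set d := spectral_diag A => eA.
have uP : P \is unitarymx := spectral_unitarymx A.
have iP : invmx P = map_mx Num.conj P^T by rewrite invmx_unitary.
have PP : P *m map_mx Num.conj P^T = 1%:M by apply/unitarymxP.
have dge0 : forall j, 0 <= d 0 j.
  move=> j; have := hpos (col j (map_mx Num.conj P^T)).
  have -> : adjmx (col j (map_mx Num.conj P^T)) = row j P.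
    by apply/matrixP=> a b; rewrite !mxE conjcK.
  rewrite rowE colE eA iP !mulmxA !(mulmxtVK _ uP).
  rewrite -mulmxA mul_diag_mx -rowE !mxE.
  by rewrite eqxx mulr1.
exists (diag_mx (map_mx sqrtC d) *m P).
rewrite adjmx_mul adjmx_diag [adjmx P]adjmxE mulmxA -[_ *m diag_mx _ *m diag_mx _]mulmxA.
rewrite mulmx_diag {1}eA iP; congr (_ *m diag_mx _ *m _).
apply/rowP=> j; rewrite !mxE geC0_conj ?sqrtC_ge0 // -expr2 sqrtCK //.
Qed.

Lemma Re_ge0 (z : C) : 0 <= z -> 0 <= complex.Re z.
Proof. by case: z => a b; rewrite lecE /= => /andP[_]. Qed.

Lemma tr_sandwich p q r (G : 'M[C]_(p, q)) (K : 'M[C]_(q, r)) (E : 'M[C]_r) :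
  0 <= \tr (adjmx G *m G *m (K *m (adjmx E *m E) *m adjmx K)).
Proof.
rewrite (_ : adjmx G *m G *m (K *m (adjmx E *m E) *m adjmx K) =
   (adjmx G *m G *m K *m adjmx E) *m (E *m adjmx K)); last by rewrite !mulmxA.
rewrite mxtrace_mulC; have := tr_gram_ge0 (G *m K *m adjmx E).
by rewrite !adjmx_mul adjmxK !mulmxA.
Qed.

Lemma jointp_ge0 l (I : finType) (S : strategy R l I) x u y z a s b c :
  valid_strategy S -> 0 <= jointp S x u y z a s b c.
Proof.
case=> [[hrho _] hA _ hB hC].
have [E eE] := gram_psd hrho.
have [GA eGA] := gram_psd ((hA x).1 a).
have [GB eGB] := gram_psd ((hB y).1 b).
have [GC eGC] := gram_psd ((hC z).1 c).
rewrite /jointp /post_state eGA eGB eGC eE -!tensmx_mul -!adjmx_tens.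
apply: Re_ge0; rewrite mulmx_sumr linear_sum /=; apply: sumr_ge0 => k _.
exact: tr_sandwich.
Qed.

Lemma plus2_inj : injective plus2.
Proof. by move=> [] [] // /(congr1 val); rewrite /plus2 /= !inordK. Qed.

Definition emb l (y : {ffun 'I_l -> option bool}) : {ffun 'I_l -> option 'I_4} :=
  [ffun i => omap plus2 (y i)].
Definition prj l (y : {ffun 'I_l -> option 'I_4}) : {ffun 'I_l -> option bool} :=
  [ffun i => omap (fun k : 'I_4 => k == plus2 true) (y i)].

Lemma prjK l (y : {ffun 'I_l -> option bool}) : prj (emb y) = y.
Proof.
apply/ffunP=> i; rewrite !ffunE; case: (y i) => [b|] //=.
by rewrite (inj_eq plus2_inj); case: b.
Qed.

Lemma reindex_emb l (F : {ffun 'I_l -> option 'I_4} -> R) :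
  (forall y, y != emb (prj y) -> F y = 0) ->
  \sum_y F y = \sum_(y' : {ffun 'I_l -> option bool}) F (emb y').
Proof.
move=> H; rewrite (bigID (fun y => y == emb (prj y))) /= [X in _ + X]big1 ?addr0;
  last by move=> y hy; exact: H.
rewrite (reindex_onto (@emb l) (@prj l)) /=; last by move=> y /eqP e; exact/esym.
by apply: eq_bigl => y'; rewrite prjK !eqxx.
Qed.

Lemma pKey_emb (alpha : R) l (x : bits l) (y : {ffun 'I_l -> option bool}) :
  pKey alpha x (emb y) = pClone alpha x y.
Proof.
apply: eq_bigr => i _; rewrite ffunE; case: (y i) => [b|] //=.
by rewrite (inj_eq plus2_inj).
Qed.

Lemma pKey0 (alpha : R) l (x : bits l) (y : {ffun 'I_l -> option 'I_4}) :
  y != emb (prj y) -> pKey alpha x y = 0.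
Proof.
move=> hy.
have [i hi] : exists i, y i != emb (prj y) i.
  apply/existsP; move: hy; apply: contraR; rewrite negb_exists => /forallP h.
  by apply/eqP/ffunP => i; apply/eqP; move: (h i); rewrite negbK.
rewrite /pKey (bigD1 i) //=; move: hi; rewrite !ffunE; case: (y i) => [k|] //= hk.
case: eqP => [ek|_]; last by rewrite mul0r.
move: hk; rewrite ek => /negP; case; case: (x i); rewrite ?(inj_eq plus2_inj) ?eqxx //=.
Qed.

Definition consist l (x : bits l) (y : {ffun 'I_l -> option bool}) :=
  [forall i, (y i == None) || (y i == Some (x i))].

Lemma pClone0 (alpha : R) l (x : bits l) (y : {ffun 'I_l -> option bool}) :
  ~~ consist x y -> pClone alpha x y = 0.
Proof.
move=> hn; have [j] : exists j, ~~ ((y j == None) || (y j == Some (x j))).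
  by apply/existsP; rewrite -negb_forall.
rewrite negb_or => /andP[h1 h2].
rewrite /pClone (bigD1 j) //=; move: h1 h2; case: (y j) => [b|] //= _.
by move=> hb; rewrite ifN ?mul0r.
Qed.

Lemma pClone_ge0 (alpha : R) l (x : bits l) y : 0 <= alpha <= 1 -> 0 <= pClone alpha x y.
Proof.
case/andP=> a0 a1; apply: prodr_ge0 => i _; case: (y i) => [b|] //.
by case: eqP => _ //; rewrite subr_ge0.
Qed.

Lemma pU_ge0 (gamma : R) l (u : ustr l) : 0 <= gamma <= 1 -> 0 <= pU gamma u.
Proof.
case/andP=> g0 g1; apply: prodr_ge0 => i _; case: (u i) => [b|].
  by rewrite divr_ge0.
by rewrite subr_ge0.
Qed.

Lemma pX_ge0 l (x : bits l) : 0 <= @pX R l x.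
Proof. by rewrite /pX invr_ge0 exprn_ge0. Qed.

Lemma win_count l (gamma alpha delta : R) x u (y z : {ffun 'I_l -> option bool}) a s b c :
  consist x y -> consist x z ->
  [&& accept gamma delta x u a s,
      eq_on (Tset x (emb y) (emb z)) (Atilde u (emb y) a) b
    & eq_on (Tset x (emb y) (emb z)) (Atilde u (emb z) a) c] ->
  ((1 - gamma) + gamma * omega_CHSH - delta / 2) * l%:R
    <= #|[set i | clone_win_i x u y z a s b c i]|%:R.
Proof.
move=> cy cz /and3P[acc eb ec].
set L := [set i | (u i != None) && ((a i (+) s i) != xu x u i)].
have sub : ~: L \subset [set i | clone_win_i x u y z a s b c i].
  apply/subsetP => i; rewrite !inE negb_and negbK /clone_win_i.
  case hu: (u i) => [bb|] /=; first by rewrite negbK.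
  move=> _; move: (forallP cy i) (forallP cz i).
  case/orP=> [/eqP->|/eqP yi] //; case/orP=> [/eqP->|/eqP zi]; rewrite ?orbT //.
  have iT : i \in Tset x (emb y) (emb z) by rewrite inE !ffunE yi zi /= !eqxx.
  move/forall_inP: eb => /(_ i iT); move/forall_inP: ec => /(_ i iT).
  by rewrite !ffunE hu yi zi /= => /eqP <- /eqP <-; rewrite !eqxx.
have e : (#|~: L|%:R : R) = l%:R - #|L|%:R.
  have hc : (l%:R : R) = #|L|%:R + #|~: L|%:R by rewrite -natrD cardsC card_ord.
  by rewrite hc addrC addKr.
apply: le_trans (_ : _ <= #|~: L|%:R) _; last by rewrite ler_nat subset_leq_card.
rewrite e.
have -> : ((1 - gamma) + gamma * omega_CHSH - delta / 2) * l%:R =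
  l%:R - (gamma * (1 - omega_CHSH) + delta / 2) * l%:R by ring.
by rewrite lerD2l lerN2.
Qed.

Definition Sp l (S : strategy R l (option 'I_4)) : strategy R l (option bool) :=
  @Strategy R l (option bool) (dA S) (dB S) (dBo S) (dCh S) (nK S) (st_rho S)
    (st_A S) (st_K S) (fun y => st_Bob S (emb y)) (fun z => st_Charlie S (emb z)).

Lemma Sp_valid l (S : strategy R l (option 'I_4)) : valid_strategy S -> valid_strategy (Sp S).
Proof. by case=> h1 h2 h3 h4 h5; split => // y; [exact: h4 | exact: h5]. Qed.

Lemma jointp_Sp l (S : strategy R l (option 'I_4)) x u y z a s b c :
  jointp (Sp S) x u y z a s b c = jointp S x u (emb y) (emb z) a s b c.
Proof. by []. Qed.
End Pos.

Unset Implicit Arguments.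

Theorem lemma26 (R : realType) (gamma alpha delta kappa : R) (l : nat)
  (S : strategy R l (option 'I_4)) :
  0 < gamma < 1 -> 0 < alpha < 1 -> 0 < delta -> 0 < kappa ->
  (* delta_{gamma,alpha}: omega^*(CLONE) <= (1-gamma) + gamma omega^*(CHSH) - delta *)
  (forall S1 : strategy R 1 (option bool), valid_strategy S1 ->
     clone_win_prob gamma alpha S1 <= (1 - gamma) + gamma * omega_CHSH - delta) ->
  (* kappa: parallel repetition bound for CLONE *)
  (forall (l' : nat) (S' : strategy R l' (option bool)), valid_strategy S' ->
     clone_par_prob gamma alpha ((1 - gamma) + gamma * omega_CHSH - delta / 2) S'
       <= powR 2 (- (kappa * delta ^+ 3 * alpha ^+ 4 * l'%:R))) ->
  valid_strategy S ->
  attack_prob gamma alpha delta S <= powR 2 (- (kappa * delta ^+ 3 * alpha ^+ 4 * l%:R)).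
Proof.
move=> /andP[g0 g1] /andP[a0 a1] d0 k0 _ hpar hv.
have g01 : 0 <= gamma <= 1 by rewrite !ltW.
have a01 : 0 <= alpha <= 1 by rewrite !ltW.
apply: le_trans (hpar l (Sp S) (Sp_valid hv)).
rewrite /attack_prob /clone_par_prob /clone_expect.
apply: ler_sum => x _; apply: ler_sum => u _.
rewrite reindex_emb; last first.
  move=> y hy; apply: big1 => z _; apply: big1 => a _; apply: big1 => s _.
  apply: big1 => gb _; apply: big1 => gc _.
  by rewrite pKey0 // !(mulr0, mul0r).
apply: ler_sum => y _.
rewrite reindex_emb; last first.
  move=> z hz; apply: big1 => a _; apply: big1 => s _.
  apply: big1 => gb _; apply: big1 => gc _.
  by rewrite (@pKey0 R alpha _ x _ hz) !(mulr0, mul0r).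
apply: ler_sum => z _; apply: ler_sum => a _; apply: ler_sum => s _.
apply: ler_sum => gb _; apply: ler_sum => gc _.
rewrite !pKey_emb jointp_Sp.
have [hc|hc] := boolP (consist x y && consist x z); last first.
  by move: hc; rewrite negb_and => /orP[] /(@pClone0 R alpha) ->; rewrite !(mulr0, mul0r).
case/andP: hc => cy cz.
apply: ler_wpM2l.
  by rewrite !mulr_ge0 ?pX_ge0 ?pU_ge0 ?pClone_ge0 ?jointp_ge0.
set att := [&& _, _ & _].
have W := @win_count R l gamma alpha delta x u y z a s gb gc cy cz.
rewrite -/att in W; clearbody att; case: att W => [W|_]; last by rewrite ler0n.
by rewrite (W isT).
Qed.
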